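(* Let $K$ be a field of prime characteristic $p$, $C$ a cyclic $p$-group of order $q>1$, and $\tilde C$ its subgroup of index $p$. Let $A,B\in P_{KC}$. If $\alpha_1(A)=\alpha_1(B)$ and $A\!\downarrow_{\tilde C}=B\!\downarrow_{\tilde C}$, then $A=B$.
   Context: The indecomposable $KC$-modules up to isomorphism are $V_1,\dots,V_q$ with $\dim V_r=r$; $R_{KC}$ is the Green ring with $\mathbb{Z}$-basis $V_1,\dots,V_q$ (addition from direct sum, multiplication from tensor product). $P_{KC}$ is the $\mathbb{Z}$-span of the permutation modules, which has $\mathbb{Z}$-basis $V_1,V_p,V_{p^2},\dots,V_q$. For $A=\sum_i\alpha_i(A)V_i\in R_{KC}$, $\alpha_1(A)$ is the coefficient of $V_1$. $A\mapsto A\!\downarrow_{\tilde C}$ is the ring homomorphism $R_{KC}\to R_{K\tilde C}$ induced by restriction. *)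

(* Defs.v *)
From HB Require Import structures.
From mathcomp Require Import all_boot all_order all_algebra.
Set Implicit Arguments. Unset Strict Implicit. Unset Printing Implicit Defensive.
Import Order.TTheory GRing.Theory Num.Theory.
Local Open Scope ring_scope.

(* C = <g> cyclic of order q.  A (finite-dimensional) KC-module of dimension d
   is encoded by the matrix X of the action of g on row vectors K^d.
   Restriction to the subgroup tilde C = <g^p> (index p) is X ^+ p. *)

Definition mod_iso (K : fieldType) (m n : nat) (X : 'M[K]_m) (Y : 'M[K]_n) :=
  exists (P : 'M[K]_(m, n)) (Q : 'M[K]_(n, m)),
    [/\ P *m Q = 1%:M, Q *m P = 1%:M & X *m P = P *m Y].

(* The indecomposable module V_r : a single Jordan block of size r (eigenvalue 1). *)
Definition Vmod (K : fieldType) (r : nat) : 'M[K]_r :=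
  \matrix_(i < r, j < r) (((i : nat) == j) || ((j : nat) == i.+1))%:R.

Fixpoint Vsum (K : fieldType) (s : seq nat) : 'M[K]_(sumn s) :=
  match s return 'M[K]_(sumn s) with
  | [::] => 0
  | r :: s' => block_mx (Vmod K r) 0 0 (Vsum K s')
  end.

(* The module  sum_{r=1}^{q} c(r) V_r  for a nonnegative coefficient function c. *)
Definition sizes (q : nat) (c : nat -> nat) : seq nat :=
  flatten [seq nseq (c r) r | r <- iota 1 q].
Definition Vcomb (K : fieldType) (q : nat) (c : nat -> nat) : 'M[K]_(sumn (sizes q c)) :=
  Vsum K (sizes q c).

(* Elements of the Green ring R_{KC}: A r is the coefficient alpha_r(A) of V_r,
   with support in {1,...,q}. *)
Definition green_elt (q : nat) (A : nat -> int) : Prop :=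
  forall r, ((r == 0%N) || (q < r)%N) -> A r = 0.

(* P_{KC}: Z-span of V_1, V_p, V_{p^2}, ..., V_q. *)
Definition perm_elt (p q : nat) (A : nat -> int) : Prop :=
  green_elt q A /\ forall r, A r != 0 -> exists k, r = (p ^ k)%N.

Definition posc (A : nat -> int) (r : nat) : nat := if 0 <= A r then `|A r|%N else 0%N.
Definition negc (A : nat -> int) (r : nat) : nat := if A r < 0 then `|A r|%N else 0%N.

(* Writing A = A+ - A-, B = B+ - B-
   with A+,A-,B+,B- genuine modules, equality in the Green ring (free abelian group
   on isoclasses of indecomposables, by Krull-Schmidt) means
   (A+ + B-)|_{tilde C} is isomorphic to (B+ + A-)|_{tilde C}. *)
Definition res_eq (K : fieldType) (p q : nat) (A B : nat -> int) : Prop :=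
  mod_iso (Vcomb K q (fun r => posc A r + negc B r)%N ^+ p)
          (Vcomb K q (fun r => posc B r + negc A r)%N ^+ p).

(* Main.v *)
Require Import Defs.
From HB Require Import structures.
From mathcomp Require Import all_boot all_order all_algebra all_fingroup.
From mathcomp Require Import ring zify.
From Stdlib Require Import FunctionalExtensionality.
Import Order.TTheory GRing.Theory Num.Theory.
Local Open Scope ring_scope.

Section Mat.
Variable K : fieldType.

Lemma exp_block_diag (m n : nat) (A : 'M[K]_m) (B : 'M[K]_n) k :
  (block_mx A 0 0 B : 'M_(m + n)) ^+ k = block_mx (A ^+ k) 0 0 (B ^+ k).
Proof.
elim: k=> [|k IHk]; first by rewrite !expr0 -scalar_mx_block.
rewrite !exprS IHk -!mulmxE (mulmx_block A _ _ _ (A ^+ k)).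
by rewrite !mulmx0 !mul0mx !add0r !addr0.
Qed.

Lemma sub1_block (m n : nat) (A : 'M[K]_m) (B : 'M[K]_n) :
  (block_mx A 0 0 B : 'M_(m + n)) - 1 = block_mx (A - 1) 0 0 (B - 1).
Proof.
by rewrite [1 in LHS]scalar_mx_block opp_block_mx add_block_mx !oppr0 !addr0.
Qed.

Definition Nsh (r : nat) : 'M[K]_r := \matrix_(i < r, j < r) ((j : nat) == i.+1)%:R.

Lemma Vmod_N r : Vmod K r = Nsh r + 1.
Proof.
apply/matrixP => i j; rewrite !mxE.
case: (eqVneq i j) => [-> | ne].
  by rewrite eqxx ltn_eqF //= add0r.
by rewrite /= (_ : ((i:nat) == j) = false) ?addr0 //; apply/negbTE.
Qed.

Lemma sum_ord_eq (r m : nat) :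
  \sum_(l < r) (((l : nat) == m)%:R : K) = (m < r)%:R.
Proof.
case: (ltnP m r) => h.
  rewrite (bigD1 (Ordinal h)) //= eqxx big1 ?addr0 // => l /eqP ne.
  case: eqP => // e; case: ne; exact: val_inj.
by rewrite big1 // => l _; rewrite ltn_eqF // (leq_trans (ltn_ord l) h).
Qed.

Lemma Nsh_exp r k : (Nsh r) ^+ k = \matrix_(i < r, j < r) ((j : nat) == (i + k)%N)%:R.
Proof.
elim: k => [|k IH].
  by apply/matrixP => i j; rewrite expr0 !mxE addn0 eq_sym.
apply/matrixP => i j; rewrite exprSr -mulmxE IH mxE.
under eq_bigr => l _ do rewrite !mxE.
transitivity (\sum_(l < r) (((l : nat) == (i + k)%N)%:R * ((j : nat) == (i + k).+1)%:R : K)).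
  by apply: eq_bigr => l _; case: eqP => [-> //|]; rewrite !mul0r.
rewrite -mulr_suml sum_ord_eq mxE addnS.
case: eqP => [e|]; last by rewrite !mulr0.
by rewrite -e ltnW // mulr1.
Qed.


Lemma iter_ordS r k (i : 'I_r) : val (iter k (@ordS r) i) = ((i + k) %% r)%N.
Proof.
elim: k => [|k IH]; first by rewrite addn0 modn_small.
by rewrite iterS /= IH -addn1 modnDml addn1 addnS.
Qed.

Lemma rank_Nsh r k : \rank (Nsh r ^+ k) = (r - k)%N.
Proof.
case: r => [|r]; first by apply/eqP; rewrite -leqn0 rank_leq_row.
pose s : {perm 'I_r.+1} := perm (@ordS_inj r.+1).
have E : Nsh r.+1 ^+ k = col_perm ((s ^+ k)^-1)%g (pid_mx (r.+1 - k)).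
  apply/matrixP => i j; rewrite Nsh_exp !mxE.
  have H1 : ((i : nat) == (s ^- k)%g j) = ((s ^+ k)%g i == j).
    change ((i == (s ^- k)%g j :> 'I_r.+1) = ((s ^+ k)%g i == j)).
    by rewrite eq_sym (canF_eq (permKV _)).
  rewrite H1.
  have H2 : val ((s ^+ k)%g i) = ((i + k) %% r.+1)%N.
    rewrite permX -iter_ordS; congr val.
    by elim: (k) => //= n ->; rewrite permE.
  rewrite -[_ == j]/(val ((s ^+ k)%g i) == val j) H2.
  congr (_%:R); rewrite ltn_subRL [(k + i)%N]addnC.
  case: (ltnP (i + k) r.+1) => h.
    by rewrite modn_small // andbT eq_sym.
  rewrite andbF ltn_eqF //; exact: (leq_trans (ltn_ord j)).
rewrite E col_permE mxrankMfree ?rank_pid_mx ?leq_subr //.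
by rewrite row_free_unit unitmx_perm.
Qed.


Lemma Vmod_pow (p r : nat) : prime p -> p \in [pchar K] ->
  Vmod K r ^+ p - 1 = Nsh r ^+ p.
Proof.
case: p => [//|p] pp pK; rewrite Vmod_N exprDn_comm; last exact: commr1.
rewrite big_ord_recr big_ord_recl /= subnn bin0 binn expr0 !expr1n !mulr1n mul1r mulr1 subn0.
rewrite big1 ?addr0 ?addrK // => i _.
have hi : (0 < bump 0 i < p.+1)%N.
  by rewrite /bump /= add1n ltnS ltn_ord.
have [d ->] := dvdnP (prime_dvd_bin pp hi).
by rewrite mulrnA -[_ *+ p.+1]scaler_nat (pcharf0 pK) scale0r.
Qed.


Lemma rank_Vsum (p : nat) (s : seq nat) (j : nat) : prime p -> p \in [pchar K] ->
  \rank ((Vsum K s ^+ p - 1) ^+ j) = sumn [seq (r - p * j)%N | r <- s].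
Proof.
move=> pp pK; elim: s => [|r s IH] /=.
  by apply/eqP; rewrite -leqn0 rank_leq_row.
rewrite exp_block_diag sub1_block exp_block_diag rank_diag_block_mx IH.
by rewrite Vmod_pow // -exprM rank_Nsh.
Qed.

Lemma sumn_sizes (q : nat) (c : nat -> nat) (f : nat -> nat) :
  sumn [seq f r | r <- sizes q c] = (\sum_(r <- iota 1 q) c r * f r)%N.
Proof.
rewrite /sizes; elim: (iota 1 q) => [|a l IH]; first by rewrite big_nil.
by rewrite /= map_cat sumn_cat IH big_cons map_nseq sumn_nseq mulnC.
Qed.


Lemma iso_rank m n (X : 'M[K]_m) (Y : 'M[K]_n) : mod_iso X Y ->
  forall j, \rank ((X - 1) ^+ j) = \rank ((Y - 1) ^+ j).
Proof.
move=> [P [Q [PQ QP XP]]] j.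
have E : (X - 1) ^+ j *m P = P *m (Y - 1) ^+ j.
  elim: j => [|j IH]; first by rewrite !expr0 mul1mx mulmx1.
  have H : (X - 1) *m P = P *m (Y - 1) by rewrite mulmxBl mulmxBr mul1mx mulmx1 XP.
  by rewrite !exprSr -!mulmxE -mulmxA H mulmxA IH -mulmxA.
apply/eqP; rewrite eqn_leq; apply/andP; split.
  rewrite -[X in (\rank X <= _)%N]mulmx1 -PQ mulmxA.
  by rewrite (leq_trans (mxrankM_maxl _ _)) // E mxrankM_maxr.
rewrite -[X in (\rank X <= _)%N]mul1mx -QP -mulmxA -E.
by rewrite (leq_trans (mxrankM_maxr _ _)) // mxrankM_maxl.
Qed.

End Mat.
Lemma posc_negc (A : nat -> int) r : (posc A r)%:Z - (negc A r)%:Z = A r.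
Proof. by rewrite /posc /negc; case: (A r) => n //=; rewrite ?subr0 // NegzE add0r. Qed.

Lemma int_sum (s : seq nat) (F : nat -> nat) :
  ((\sum_(r <- s) F r)%N)%:Z = \sum_(r <- s) (F r)%:Z.
Proof. exact: (big_morph Posz PoszD (erefl _)). Qed.

Theorem corollary4p2 (K : fieldType) (p n : nat) (A B : nat -> int) :
  prime p -> p \in [pchar K] -> (0 < n)%N ->
  perm_elt p (p ^ n) A -> perm_elt p (p ^ n) B ->
  A 1%N = B 1%N ->
  res_eq K p (p ^ n) A B ->
  A = B.
Proof.
move=> pp pK n0 [gA pA] [gB pB] A1 Hres.
have p1 : (1 < p)%N := prime_gt1 pp.
pose D r := A r - B r.
have Hsum : forall j, \sum_(r <- iota 1 (p ^ n)) D r * ((r - p * j)%N)%:Z = 0.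
  move=> j; have := @iso_rank K _ _ _ _ Hres j.
  rewrite /Vcomb !rank_Vsum // !sumn_sizes => /(congr1 Posz); rewrite !int_sum => /eqP.
  rewrite -subr_eq0 -sumrB => /eqP H; rewrite -[RHS]H; apply: eq_bigr => r _.
  rewrite /D -(posc_negc A r) -(posc_negc B r) !PoszM !PoszD; ring.
have HD1 : D 1%N = 0 by rewrite /D A1 subrr.
have Hsupp : forall r, D r != 0 -> exists m, r = (p ^ m)%N /\ (0 < m <= n)%N.
  move=> r Dr.
  have [m rE] : exists m, r = (p ^ m)%N.
    case: (eqVneq (A r) 0) => Ar; last exact: pA.
    apply: pB; apply: contra Dr => /eqP Br; by rewrite /D Ar Br subrr.
  exists m; split => //; apply/andP; split.
    rewrite lt0n; apply: contra Dr => /eqP m0; by rewrite rE m0 expn0 HD1.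
  rewrite leqNgt; apply: contra Dr => mn.
  have qr : (p ^ n < r)%N by rewrite rE ltn_exp2l.
  by rewrite /D gA ?gB ?qr ?orbT // subrr.
have key : forall k, (0 < k <= n)%N ->
    (forall m, (k < m <= n)%N -> D (p ^ m)%N = 0) -> D (p ^ k)%N = 0.
  move=> k /andP [k0 kn] IH.
  have := Hsum (p ^ k.-1 - 1)%N.
  have pj : (p * (p ^ k.-1 - 1) = p ^ k - p)%N by rewrite mulnBr muln1 -expnS prednK.
  have ppk : (p <= p ^ k)%N.
    by rewrite -[X in (X <= _)%N]expn1 leq_exp2l.
  rewrite pj (bigD1_seq (p ^ k)%N) ?iota_uniq //; last first.
    by rewrite mem_iota expn_gt0 (ltnW p1) /= add1n ltnS leq_exp2l.
  rewrite big1_seq ?addr0.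
    rewrite subKn // => /eqP; rewrite /= addr0 mulf_eq0 => /orP [/eqP //|].
    by move=> /eqP [] p0; move: p1; rewrite p0.
  move=> r /andP [ne _]; case: (eqVneq (D r) 0) => [->|Dr]; first by rewrite mul0r.
  have [m [rE /andP [m0 mn]]] := Hsupp r Dr.
  case: (ltngtP m k) => mk.
  - have : (r - (p ^ k - p) = 0)%N.
      have h1 : (p ^ m <= p ^ k.-1)%N by rewrite leq_exp2l // -ltnS prednK.
      have h2 : (p <= p ^ k.-1)%N.
        by rewrite -[X in (X <= _)%N]expn1 leq_exp2l // -ltnS prednK // (leq_ltn_trans m0 mk).
      have h3 : (p ^ k = p * p ^ k.-1)%N by rewrite -expnS prednK.
      rewrite rE h3; nia.
    by move=> ->; rewrite mulr0.
  - by case/negP: Dr; rewrite rE IH // mk mn.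
  - by case/negP: ne; rewrite rE mk.
have all : forall d k, (0 < k <= n)%N -> (n - k <= d)%N -> D (p ^ k)%N = 0.
  elim=> [|d IHd] k hk hd; apply: (key k hk) => m /andP [km mn].
    exfalso; lia.
  apply: IHd; lia.
apply: functional_extensionality => r.
apply/eqP; rewrite -subr_eq0; apply/eqP.
case: (eqVneq (D r) 0) => // Dr.
have [m [rE hm]] := Hsupp r Dr.
by move: Dr; rewrite rE (all n m hm) ?leq_subr ?eqxx.
Qed.
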